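(* Let $n\ge1$, $\gamma>0$, let $\phi:I\to\mathbb{R}$ be a proper closed convex function on an interval $I$, let $\psi=\phi^*$, and let $\hat X\in\mathcal{U}(\mu,\nu)$ (for some probability vectors $\mu,\nu\in\mathbb{R}^n$) satisfy $\hat X_{ij}\in\operatorname{int}(\operatorname{dom}\phi)$ for all $i,j$. Then the infimum $$\inf_{C\in S_h,\ u,v\in\mathbb{R}^n} E(u,v,C):=\psi\Big(\frac{u\oplus v-C}{\gamma}\Big)-\Big\langle\frac{u\oplus v-C}{\gamma},\hat X\Big\rangle$$ is attained. Moreover, if $(u^*,v^*,C^* )$ is a minimizer and $\psi$ is twice differentiable with $\psi''>0$ at each entry of $(u^*\oplus v^*-C^* )/\gamma$, then the optimal $C^*\in S_h$ is unique.
   Context: $\mathcal{U}(\mu,\nu):=\{X\in\mathbb{R}_+^{n\times n}: X\mathbf{1}=\mu,\ X^\top\mathbf{1}=\nu\}$. $S_h:=\{C\in\mathbb{R}_+^{n\times n}: C=C^\top,\ \operatorname{diag}(C)=0\}$. $\psi:=\phi^*$ is the Fenchel conjugate; for a matrix $Z$, $\psi(Z):=\sum_{i,j}\psi(Z_{ij})$. $(u\oplus v)_{ij}:=u_i+v_j$. *)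

(* Defs.v *)
From HB Require Import structures.
From mathcomp Require Import all_boot all_order all_algebra.
From mathcomp Require Import all_classical all_reals all_analysis.
Set Implicit Arguments. Unset Strict Implicit. Unset Printing Implicit Defensive.
Import Order.TTheory GRing.Theory Num.Theory.
Import numFieldNormedType.Exports.
Local Open Scope classical_set_scope.
Local Open Scope ring_scope.

Section Defs.
Variable R : realType.

Definition edom (phi : R -> \bar R) : set R := [set x | (phi x < +oo)%E].

(* phi : I -> R proper closed convex on an interval I, encoded as
   phi : R -> \bar R equal to +oo outside I = dom phi. *)
Definition proper_closed_convex (phi : R -> \bar R) : Prop :=
  [/\ (forall x, phi x != -oo%E),
      (exists x, (phi x < +oo)%E),
      (forall x y t : R, (phi x < +oo)%E -> (phi y < +oo)%E -> (0 <= t <= 1)%R ->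
          (phi (t * x + (1 - t) * y)%R <=
             (t * fine (phi x) + (1 - t) * fine (phi y))%R%:E)%E) &
      (* closed = lower semicontinuous *)
      (forall x (a : R), (a%:E < phi x)%E -> \forall y \near x, (a%:E < phi y)%E)].

Definition fconj (phi : R -> \bar R) (y : R) : \bar R :=
  ereal_sup (range (fun x => ((x * y)%:E - phi x)%E)).

Definition prob_vec n (mu : 'I_n -> R) : Prop :=
  (forall i, 0 <= mu i) /\ \sum_(i < n) mu i = 1.

Definition transport_plan n (mu nu : 'I_n -> R) (X : 'M[R]_n) : Prop :=
  [/\ (forall i j, 0 <= X i j),
      (forall i, \sum_(j < n) X i j = mu i) &
      (forall j, \sum_(i < n) X i j = nu j)].

Definition Sh n (C : 'M[R]_n) : Prop :=
  [/\ (forall i j, 0 <= C i j), (forall i j, C i j = C j i) & (forall i, C i i = 0)].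

Definition Zmat n (gamma : R) (u v : 'I_n -> R) (C : 'M[R]_n) (i j : 'I_n) : R :=
  (u i + v j - C i j) / gamma.

Definition Eobj n (psi : R -> \bar R) (gamma : R) (Xh : 'M[R]_n)
    (u v : 'I_n -> R) (C : 'M[R]_n) : \bar R :=
  (\sum_(i < n) \sum_(j < n)
     (psi (Zmat gamma u v C i j) - (Zmat gamma u v C i j * Xh i j)%:E))%E.

Definition is_minimizer n (psi : R -> \bar R) (gamma : R) (Xh : 'M[R]_n)
    (u v : 'I_n -> R) (C : 'M[R]_n) : Prop :=
  Sh C /\ forall u' v' (C' : 'M[R]_n), Sh C' ->
     (Eobj psi gamma Xh u v C <= Eobj psi gamma Xh u' v' C')%E.

Definition twice_diff_pos (psi : R -> \bar R) (y : R) : Prop :=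
  let f := fun x => fine (psi x) in
  [/\ (\forall x \near y, psi x \is a fin_num /\ derivable f x 1),
      derivable (derive1 f) y 1 &
      0 < derive1 (derive1 f) y].

End Defs.

(* Main.v *)
Require Import Defs.
From HB Require Import structures.
From mathcomp Require Import all_boot all_order all_algebra.
From mathcomp Require Import all_classical all_reals all_analysis.
From mathcomp Require Import ring lra.
Import Order.TTheory GRing.Theory Num.Theory.
Import numFieldNormedType.Exports.
Local Open Scope classical_set_scope.
Local Open Scope ring_scope.


Lemma ereal_dense {R : realType} {x y : \bar R} : (x < y)%E -> exists a : R, (x < a%:E < y)%E.
Proof.
case: x => [x||]; case: y => [y||] //=.
- rewrite lte_fin => xy; exists ((x + y) / 2).
  by rewrite !lte_fin !midf_lt.
- by move=> _; exists (x + 1); rewrite lte_fin ltrDl ltr01 ltry.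
- by move=> _; exists (y - 1); rewrite lte_fin gtrBl ltr01 ltNyr.
- by move=> _; exists 0; rewrite ltNyr ltry.
Qed.

Section Lsc.
Variables (R : realType) (T : topologicalType).

Definition lscf (F : T -> \bar R) := forall x (a : R), (a%:E < F x)%E ->
  \forall y \near x, (a%:E < F y)%E.

Lemma gtNy_add (a b : \bar R) : (-oo < a)%E -> (-oo < b)%E -> (-oo < a + b)%E.
Proof. by case: a => [a||]; case: b => [b||] => //= _ _; rewrite ?ltNyr ?ltNye. Qed.

Lemma lsc_add (F G : T -> \bar R) : lscf F -> lscf G ->
  (forall x, -oo < F x)%E -> (forall x, -oo < G x)%E -> lscf (fun x => F x + G x)%E.
Proof.
move=> lF lG nF nG x a hh.
have [a1 [a2 [h1 h2 ->]]] :
    exists a1 a2 : R, [/\ (a1%:E < F x)%E, (a2%:E < G x)%E & a = a1 + a2].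
  move: (nF x) (nG x) hh; case: (F x) => [r||] //; case: (G x) => [g||] //.
  - rewrite -EFinD lte_fin => _ _ h.
    exists (r - (r + g - a) / 2), (g - (r + g - a) / 2).
    by rewrite !lte_fin; split; [lra|lra|field].
  - move=> _ _ _; exists (r - 1), (a - (r - 1)).
    by rewrite !lte_fin ltry; split => //; [lra | ring].
  - move=> _ _ _; exists (a - (g - 1)), (g - 1).
    by rewrite !lte_fin ltry; split => //; [lra | ring].
  - by move=> _ _ _; exists 0, a; split; rewrite ?ltry ?add0r.
have := lF x a1 h1; have := lG x a2 h2.
apply: filterS2 => y hG hF; rewrite EFinD.
exact: lteD.
Qed.

Lemma lsc_sum (I : Type) (s : seq I) (F : I -> T -> \bar R) :
  (forall i, lscf (F i)) -> (forall i x, -oo < F i x)%E ->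
  lscf (fun x => \sum_(i <- s) F i x)%E /\ (forall x, -oo < \sum_(i <- s) F i x)%E.
Proof.
move=> lF nF; elim: s => [|i s [IH1 IH2]].
  split => [x a|x]; rewrite ?big_nil ?ltNy0 //.
  by move=> h; apply: nearW => y; rewrite big_nil.
have E : (fun x => \sum_(j <- i :: s) F j x)%E = (fun x => F i x + \sum_(j <- s) F j x)%E.
  by apply/funext => x; rewrite big_cons.
rewrite E; split; first exact: lsc_add.
by move=> x; rewrite big_cons; apply: gtNy_add.
Qed.

Lemma lsc_real (h : T -> R) : continuous h -> lscf (fun x => (h x)%:E).
Proof.
move=> ch x a; rewrite lte_fin => ax.
have : \forall y \near x, a < h y.
  by apply: (ch x [set w | a < w]); apply: open_nbhs_nbhs; split; [exact: open_gt|].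
by apply: filterS => y; rewrite lte_fin.
Qed.

Lemma lsc_comp (psi : R -> \bar R) (g : T -> R) : continuous g ->
  (forall y (a : R), (a%:E < psi y)%E -> \forall z \near y, (a%:E < psi z)%E) ->
  lscf (fun x => psi (g x)).
Proof.
move=> cg lp x a h; have := lp _ _ h.
by move=> N; exact: (cg x _ N).
Qed.

Lemma lsc_compact_min (A : set T) (F : T -> \bar R) :
  compact A -> A !=set0 -> lscf F ->
  exists2 x, A x & forall y, A y -> (F x <= F y)%E.
Proof.
move=> cA [x0 Ax0] lsc.
have [fin|inf] := pselect (exists y, A y /\ (F y < +oo)%E); last first.
  exists x0 => // y Ay.
  have : ~~ (F y < +oo)%E by apply/negP => Fy; apply: inf; exists y.
  by rewrite -leNgt leye_eq => /eqP ->; exact: leey.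
pose D := [set a : R | exists y, A y /\ (F y < a%:E)%E].
pose B := fun a : R => [set y | A y /\ (F y < a%:E)%E].
have FF : Filter (filter_from D B).
  apply: filter_from_filter.
    case: fin => y [Ay Fy]; have [a /andP[ya _]] := ereal_dense Fy.
    by exists a, y.
  move=> a b [ya [Aya Fya]] [yb [Ayb Fyb]]; exists (Num.min a b).
    have [le|lt] := leP (F ya) (F yb).
      exists ya; split => //; rewrite EFin_min lt_min Fya /=.
      exact: le_lt_trans le Fyb.
    exists yb; split => //; rewrite EFin_min lt_min Fyb andbT.
    exact: lt_trans lt Fya.
  move=> z [Az Fz]; split; split => //; apply: (lt_le_trans Fz);
    by rewrite lee_fin ge_min lexx ?orbT.
have PF : ProperFilter (filter_from D B).
  by apply: filter_from_proper => // a [y [Ay Fy]]; exists y.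
have GA : filter_from D B A.
  case: fin => y [Ay Fy]; have [a /andP[ya _]] := ereal_dense Fy.
  by exists a; [exists y | move=> z []].
have [x [Ax clx]] := cA _ PF GA.
exists x => // y Ay; rewrite leNgt; apply/negP => Fyx.
have [a /andP[ya ax]] := ereal_dense Fyx.
have N := lsc x a ax.
have [z [[Az Fz] Nz]] := clx (B a) _ (@in_filter_from _ _ D B a (ex_intro _ y (conj Ay ya))) N.
by have := lt_trans Nz Fz; rewrite ltxx.
Qed.

End Lsc.


Section Psi.
Variable R : realType.
Variable phi : R -> \bar R.
Hypothesis hphi : proper_closed_convex phi.
Local Notation psi := (fconj phi).

Lemma psi_ge x y : ((x * y)%:E - phi x <= psi y)%E.
Proof. by apply: ereal_sup_ubound; exists x. Qed.

Lemma phi_fin {x} : (phi x < +oo)%E -> phi x = (fine (phi x))%:E.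
Proof.
move=> h; rewrite fineK // fin_numE; case: hphi => -> *.
by rewrite lt_eqF.
Qed.

Lemma psi_gtNy y : (-oo < psi y)%E.
Proof.
case: hphi => _ [x hx] _ _.
apply: (lt_le_trans _ (psi_ge x y)); rewrite (phi_fin hx) -EFinB.
exact: ltNyr.
Qed.

Lemma psi_lsc y (a : R) : (a%:E < psi y)%E -> \forall z \near y, (a%:E < psi z)%E.
Proof.
move=> /ereal_sup_gt [_ [x _ <-]] hx.
have hfin : (phi x < +oo)%E.
  rewrite ltNge; apply/negP; rewrite leye_eq => /eqP h.
  by move: hx; rewrite h /= addeNy ltNge leNye.
move: hx; rewrite (phi_fin hfin) -EFinB lte_fin; set r := fine (phi x) => hx.
have c : (fun z => x * z - r) @ y --> (x * y - r).
  by apply: cvgB; [apply: cvgMr; exact: cvg_id | exact: cvg_cst].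
have : \forall z \near y, a < x * z - r.
  by apply: (c [set w | a < w]); apply: open_nbhs_nbhs; split; [exact: open_gt | exact: hx].
apply: filterS => z hz; apply: (lt_le_trans _ (psi_ge x z)).
by rewrite (phi_fin hfin) -EFinB lte_fin.
Qed.

Lemma psi_convex a b t : (psi a < +oo)%E -> (psi b < +oo)%E -> 0 <= t <= 1 ->
  (psi (t * a + (1 - t) * b) <= (t * fine (psi a) + (1 - t) * fine (psi b))%:E)%E.
Proof.
move=> ha hb /andP[t0 t1].
have fa : psi a = (fine (psi a))%:E by rewrite fineK // fin_numElt psi_gtNy.
have fb : psi b = (fine (psi b))%:E by rewrite fineK // fin_numElt psi_gtNy.
apply: ge_ereal_sup => _ [x _ <-].
have [hfin|] := boolP (phi x < +oo)%E; last first.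
  by rewrite -leNgt leye_eq => /eqP ->; rewrite addeNy leNye.
rewrite (phi_fin hfin) -EFinB lee_fin; set r := fine (phi x).
have la : x * a - r <= fine (psi a).
  by rewrite -lee_fin -fa; have := psi_ge x a; rewrite (phi_fin hfin) -EFinB.
have lb : x * b - r <= fine (psi b).
  by rewrite -lee_fin -fb; have := psi_ge x b; rewrite (phi_fin hfin) -EFinB.
have -> : x * (t * a + (1 - t) * b) - r = t * (x * a - r) + (1 - t) * (x * b - r).
  by ring.
by apply: lerD; apply: ler_wpM2l => //; rewrite subr_ge0.
Qed.

Lemma psi_coercive xh : interior (edom phi) xh ->
  exists2 d : R, 0 < d & exists c : R, forall y,
    ((d * `|y| - c)%:E <= psi y - (y * xh)%:E)%E.
Proof.
move=> /nbhs_ballP [e e0 he].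
have hdom z : `|z| < e -> (phi (xh + z) < +oo)%E.
  move=> hz; apply: he; rewrite /ball /= opprD addrA subrr sub0r normrN //.
pose d := e / 2.
have d0 : 0 < d by rewrite divr_gt0.
have de : `|d| < e by rewrite gtr0_norm // ltr_pdivrMr // ltr_pMr // ltr1n.
have de' : `|- d| < e by rewrite normrN.
have h1 := hdom _ de; have h2 := hdom _ de'.
exists d => //; exists (Num.max (fine (phi (xh + d))) (fine (phi (xh + - d)))) => y.
have [y0|y0] := leP 0 y.
  apply: le_trans (leeB (psi_ge (xh + d) y) (lexx _)).
  rewrite (phi_fin h1) -!EFinB lee_fin ger0_norm //.
  have : fine (phi (xh + d)) <= Num.max (fine (phi (xh + d))) (fine (phi (xh + - d))) by rewrite le_max lexx.
  nra.
apply: le_trans (leeB (psi_ge (xh + - d) y) (lexx _)).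
rewrite (phi_fin h2) -!EFinB lee_fin ltr0_norm //.
have : fine (phi (xh + - d)) <= Num.max (fine (phi (xh + d))) (fine (phi (xh + - d))) by rewrite le_max lexx orbT.
nra.
Qed.

End Psi.


Section Der.
Variable R : realType.

Lemma derivable_q (g : R -> R) x : derivable g x 1 ->
  cvg ((fun h => h^-1 *: (g (h + x) - g x)) @ 0^').
Proof.
rewrite /derivable; set q1 := (fun h => _); set q2 := (fun h => _).
suff -> : q1 = q2 by [].
by apply/funext => h; rewrite /q1 /q2 /= [h%:A]mulr1.
Qed.

Lemma der_right (g : R -> R) x k : derivable g x 1 ->
  (exists2 e : R, 0 < e & forall h, 0 < h < e -> g (h + x) - g x = h * k) ->
  derive1 g x = k.
Proof.
move=> /derivable_q dg [e e0 he].
rewrite /derive1 (cvg_at_rightE _ _ dg) /=; apply: lim_near_cst; first exact: norm_hausdorff.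
exists e => //= h; rewrite /ball_ /= sub0r normrN => hlt h0.
rewrite he; last by rewrite h0 (le_lt_trans (ler_norm _) hlt).
by rewrite /= -[_ *: _]/(_ * _) mulrA mulVf ?mul1r // gt_eqF.
Qed.

Lemma der_left (g : R -> R) x k : derivable g x 1 ->
  (exists2 e : R, 0 < e & forall h, - e < h < 0 -> g (h + x) - g x = h * k) ->
  derive1 g x = k.
Proof.
move=> /derivable_q dg [e e0 he].
rewrite /derive1 (cvg_at_leftE _ _ dg) /=; apply: lim_near_cst; first exact: norm_hausdorff.
exists e => //= h; rewrite /ball_ /= sub0r normrN => hlt h0.
rewrite he; last first.
  by rewrite h0 andbT; move: hlt; rewrite ltr_norml => /andP[].
by rewrite /= -[_ *: _]/(_ * _) mulrA mulVf ?mul1r // lt_eqF.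
Qed.


Lemma flat_right (f : R -> R) y e k : 0 < e ->
  (forall h, 0 <= h < e -> f (h + y) = f y + h * k) ->
  (\forall x \near y, derivable f x 1) -> derivable (derive1 f) y 1 ->
  derive1 (derive1 f) y = 0.
Proof.
move=> e0 aff /nbhs_ballP [e2 e20 de] d2.
have dy : derivable f y 1 by apply: de; exact: ballxx.
have f1 : derive1 f y = k.
  apply: der_right dy _; exists e => // h /andP[h0 he].
  by rewrite aff ?(ltW h0) ?he //; ring.
have f2 : forall h, 0 < h < Num.min e e2 -> derive1 f (h + y) = k.
  move=> h /andP[h0]; rewrite lt_min => /andP[he he2].
  apply: der_right.
    by apply: de; rewrite /ball /= opprD addrCA subrr addr0 normrN gtr0_norm.
  exists (e - h); first by rewrite subr_gt0.
  move=> h' /andP[h'0 h'e]; rewrite addrA !aff.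
  all: try (apply/andP; split). all: try lra.
apply: der_right d2 _; exists (Num.min e e2); first by rewrite lt_min e0 e20.
by move=> h hh; rewrite f2 // f1; ring.
Qed.

Lemma flat_left (f : R -> R) y e k : 0 < e ->
  (forall h, - e < h <= 0 -> f (h + y) = f y + h * k) ->
  (\forall x \near y, derivable f x 1) -> derivable (derive1 f) y 1 ->
  derive1 (derive1 f) y = 0.
Proof.
move=> e0 aff /nbhs_ballP [e2 e20 de] d2.
have dy : derivable f y 1 by apply: de; exact: ballxx.
have f1 : derive1 f y = k.
  apply: der_left dy _; exists e => // h /andP[he h0].
  by rewrite aff ?(ltW h0) ?he //; ring.
have f2 : forall h, - Num.min e e2 < h < 0 -> derive1 f (h + y) = k.
  move=> h /andP[]; rewrite ltrNl lt_min => /andP[he he2] h0.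
  apply: der_left.
    by apply: de; rewrite /ball /= opprD addrCA subrr addr0 normrN ltr0_norm.
  exists (e + h); first lra.
  move=> h' /andP[h'e h'0]; rewrite addrA !aff.
  all: try (apply/andP; split). all: try lra.
apply: der_left d2 _; exists (Num.min e e2); first by rewrite lt_min e0 e20.
by move=> h hh; rewrite f2 // f1; ring.
Qed.

Lemma affine_contra (f : R -> R) y D s : D != 0 ->
  (forall t, 0 <= t <= 1 -> f (y + t * D) = f y + t * s) ->
  (\forall x \near y, derivable f x 1) -> derivable (derive1 f) y 1 ->
  0 < derive1 (derive1 f) y -> False.
Proof.
move=> D0 aff dn d2 pos.
have key : forall h, 0 <= h / D <= 1 -> f (h + y) = f y + h * (s / D).
  move=> h ht; have -> : h + y = y + h / D * D by field.
  by rewrite aff //; ring.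
have [Dp|Dn] := ltP 0 D.
  suff : derive1 (derive1 f) y = 0 by move=> h; rewrite h ltxx in pos.
  apply: (@flat_right f y D (s / D) Dp _ dn d2).
  move=> h /andP[h0 hD]; apply: key.
  by rewrite divr_ge0 ?(ltW Dp) //= ler_pdivrMr // mul1r ltW.
have Dn' : D < 0 by rewrite lt_neqAle D0 Dn.
suff : derive1 (derive1 f) y = 0 by move=> h; rewrite h ltxx in pos.
apply: (@flat_left f y (- D) (s / D) _ _ dn d2); first by rewrite oppr_gt0.
move=> h /andP[h0 hD]; apply: key.
rewrite -[h / D]divrNN; apply/andP; split.
  by rewrite divr_ge0 // ?oppr_ge0 // ltW // oppr_gt0.
by rewrite ler_pdivrMr ?oppr_gt0 // mul1r lerNl ltW.
Qed.

End Der.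


Section Param.
Variables (R : realType) (n : nat).
Definition Idx := (('I_n + 'I_n) + ('I_n * 'I_n))%type.
Definition Sp := {ptws Idx -> R}.

Lemma cont_proj (k : Idx) : continuous (fun f : Sp => f k).
Proof. exact: (@proj_continuous Idx (fun _ => R) k). Qed.

Lemma cont_L (a b c : Idx) (g : R) :
  continuous (fun f : Sp => (f a + f b - f c) / g).
Proof.
move=> f.
have ca := cont_proj a f; have cb := cont_proj b f; have cc := cont_proj c f.
have := continuousM (continuousB (continuousD ca cb) cc) (@cst_continuous _ _ g^-1 f).
move=> H.
exact: H.
Qed.

Lemma box_compact (M : R) : compact [set f : Sp | forall k, `[- M, M]%classic (f k)].
Proof.
exact (@tychonoff Idx (fun _ => R) (fun _ => `[- M, M]%classic) (fun _ => @segment_compact R (- M) M)).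
Qed.

Lemma closed_cond (P : R -> Prop) (k : Idx) : closed [set x : R | P x] ->
  closed [set f : Sp | P (f k)].
Proof.
move=> cP; apply: (@preimage_closed _ _ (fun f : Sp => f k) [set x | P x]) => //.
by move=> x _; exact: cont_proj.
Qed.

Lemma closed_cond2 (k l : Idx) : closed [set f : Sp | f k = f l].
Proof.
have -> : [set f : Sp | f k = f l] = (fun f : Sp => f k - f l) @^-1` [set 0].
  apply/seteqP; split => f /=; first by move=> ->; rewrite subrr.
  by move/eqP; rewrite subr_eq0 => /eqP.
apply: preimage_closed; last exact: closed_eq.
move=> f _; have ck := cont_proj k f; have cl := cont_proj l f.
have H := continuousB ck cl; exact: H.
Qed.

End Param.


Arguments lscf {R T}.
Arguments lsc_sum {R T I}.
Arguments lsc_compact_min {R T A F}.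

Section Param2.
Variables (R : realType) (n : nat).
Local Notation Sp := (Sp R n).
Local Notation Idx := (Idx n).

Lemma cont_L2 (a b c : Idx) (g x : R) :
  continuous (fun f : Sp => - ((f a + f b - f c) / g * x)).
Proof.
move=> f.
have ca := @cont_proj R n a f; have cb := @cont_proj R n b f; have cc := @cont_proj R n c f.
have := continuousN (continuousM (continuousM (continuousB (continuousD ca cb) cc)
  (@cst_continuous _ _ g^-1 f)) (@cst_continuous _ _ x f)).
move=> H; exact: H.
Qed.

Definition Uf (f : Sp) (i : 'I_n) := f (inl (inl i)).
Definition Vf (f : Sp) (i : 'I_n) := f (inl (inr i)).
Definition Cf (f : Sp) : 'M[R]_n := \matrix_(i, j) f (inr (i, j)).
Definition enc (u v : 'I_n -> R) (C : 'M[R]_n) : Sp := fun k =>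
  match k with inl (inl i) => u i | inl (inr i) => v i | inr (i, j) => C i j end.

Lemma encU u v C : Uf (enc u v C) = u. Proof. by []. Qed.
Lemma encV u v C : Vf (enc u v C) = v. Proof. by []. Qed.
Lemma encC u v C : Cf (enc u v C) = C. Proof. by apply/matrixP => i j; rewrite mxE. Qed.

Lemma closed_Sh : closed [set f : Sp | Sh (Cf f)].
Proof.
have -> : [set f : Sp | Sh (Cf f)] =
  (\bigcap_(ij in [set: 'I_n * 'I_n]) [set f : Sp | 0 <= f (inr ij)]) `&`
  (\bigcap_(ij in [set: 'I_n * 'I_n]) [set f : Sp | f (inr ij) = f (inr (ij.2, ij.1))]) `&`
  (\bigcap_(i in [set: 'I_n]) [set f : Sp | f (inr (i, i)) = 0]).
  apply/seteqP; split => f /=.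
    case=> h1 h2 h3; split; [split|] => [[i j] _|[i j] _|i _] /=.
    - by have := h1 i j; rewrite mxE.
    - by have := h2 i j; rewrite !mxE.
    - by have := h3 i; rewrite mxE.
  move=> [[h1 h2] h3]; split => [i j|i j|i]; rewrite !mxE.
  - exact: (h1 (i, j)).
  - exact: (h2 (i, j)).
  - exact: (h3 i).
apply: closedI; first apply: closedI.
- apply: closed_bigI => -[i j] _; apply: (@closed_cond R n (fun x => 0 <= x)).
  exact: closed_ge.
- by apply: closed_bigI => -[i j] _; apply: (@closed_cond2 R n).
- apply: closed_bigI => i _; apply: (@closed_cond R n (fun x => x = 0)).
  exact: closed_eq.
Qed.

End Param2.
Arguments Uf {R n}. Arguments Vf {R n}. Arguments Cf {R n}. Arguments enc {R n}.
Arguments encU {R n}. Arguments encV {R n}. Arguments encC {R n}.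

Section Main.
Variables (R : realType) (n : nat) (gamma : R) (phi : R -> \bar R) (Xh : 'M[R]_n).
Hypotheses (g0 : 0 < gamma) (hphi : proper_closed_convex phi).
Local Notation psi := (fconj phi).
Local Notation E := (Eobj psi gamma Xh).
Local Notation Z := (Zmat gamma).

Lemma sum_gtNy (I : Type) (s : seq I) (F : I -> \bar R) :
  (forall i, -oo < F i)%E -> (-oo < \sum_(i <- s) F i)%E.
Proof.
move=> h; elim: s => [|i s IH]; first by rewrite big_nil ltNy0.
by rewrite big_cons; apply: gtNy_add.
Qed.

Lemma term_gtNy y x : (-oo < psi y - (y * x)%:E)%E.
Proof. by apply: gtNy_add; [exact: psi_gtNy | exact: ltNyr]. Qed.

Lemma E_gtNy u v C : (-oo < E u v C)%E.
Proof. by apply: sum_gtNy => i; apply: sum_gtNy => j; exact: term_gtNy. Qed.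

Lemma E_fin {u v C} : (E u v C < +oo)%E -> forall i j, psi (Z u v C i j) \is a fin_num.
Proof.
move=> h i j.
have : E u v C \is a fin_num by rewrite fin_numElt E_gtNy h.
move=> /sum_fin_numP /(_ i (mem_index_enum _) isT) /sum_fin_numP /(_ j (mem_index_enum _) isT).
by rewrite fin_numB => /andP[].
Qed.

Lemma E_EFin {u v C} : (forall i j, psi (Z u v C i j) \is a fin_num) ->
  E u v C = (\sum_(i < n) \sum_(j < n) (fine (psi (Z u v C i j)) - Z u v C i j * Xh i j))%:E.
Proof.
move=> h; rewrite /Eobj -sumEFin; apply: eq_bigr => i _.
rewrite -sumEFin; apply: eq_bigr => j _.
by rewrite EFinB fineK.
Qed.


Lemma fin_lty (x : \bar R) : x \is a fin_num -> (x < +oo)%E.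
Proof. by rewrite fin_numElt => /andP[]. Qed.

Lemma sum_lin3 (I : finType) (a b c : I -> R) (x y : R) :
  \sum_i (x * a i + y * b i - c i) = x * \sum_i a i + y * \sum_i b i - \sum_i c i.
Proof. by rewrite sumrB big_split /= -!mulr_sumr. Qed.

Lemma Zeq_C {u v u' v' : 'I_n -> R} {C C' : 'M[R]_n} : Sh C -> Sh C' ->
  (forall i j, Z u' v' C' i j = Z u v C i j) -> C' = C.
Proof.
move=> [C0 Cs Cd] [C0' Cs' Cd'] hZ.
have h i j : u' i + v' j - C' i j = u i + v j - C i j.
  have := hZ i j; rewrite /Zmat => /(congr1 (fun x => x * gamma)).
  by rewrite !divfK // gt_eqF.
apply/matrixP => i j.
have := h i j; have := h j i; have := h i i; have := h j j.
have := Cs i j; have := Cs' i j; have := Cd i; have := Cd j; have := Cd' i; have := Cd' j.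
lra.
Qed.

Lemma uniq_part (u v u' v' : 'I_n -> R) (C C' : 'M[R]_n) :
  is_minimizer psi gamma Xh u v C ->
  (forall i j, twice_diff_pos psi (Z u v C i j)) ->
  is_minimizer psi gamma Xh u' v' C' -> C' = C.
Proof.
move=> [ShC minC] tw [ShC' minC'].
have finZ i j : psi (Z u v C i j) \is a fin_num.
  by case: (tw i j) => /nbhs_singleton [].
have e1 := minC u' v' C' ShC'; have e2 := minC' u v C ShC.
have EE := E_EFin finZ.
have hlt : (E u v C < +oo)%E by rewrite EE ltry.
have finZ' := E_fin (le_lt_trans e2 hlt).
have EE' := E_EFin finZ'.
pose f x := fine (psi x).
set S0 := (\sum_(i < n) _) in EE.
set S0' := (\sum_(i < n) _) in EE'.
have S0eq : S0' = S0.
  by apply/EFin_inj; rewrite -EE -EE'; apply/le_anti; rewrite e1 e2.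
have aff : forall t, 0 <= t <= 1 -> forall i j,
    f (Z u v C i j + t * (Z u' v' C' i j - Z u v C i j)) =
    f (Z u v C i j) + t * (f (Z u' v' C' i j) - f (Z u v C i j)).
  move=> t /andP[t0 t1].
  pose ut i := u i + t * (u' i - u i).
  pose vt i := v i + t * (v' i - v i).
  pose Ct := \matrix_(i, j) (C i j + t * (C' i j - C i j)).
  have ShCt : Sh Ct.
    case: ShC => [C0 Cs Cd]; case: ShC' => [C0' Cs' Cd'].
    split => [i j|i j|i]; rewrite !mxE.
    - by have := C0 i j; have := C0' i j; nra.
    - by rewrite Cs Cs'.
    - by rewrite Cd Cd'; ring.
  have Zt i j : Z ut vt Ct i j = Z u v C i j + t * (Z u' v' C' i j - Z u v C i j).
    by rewrite /Zmat mxE /ut /vt; ring.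
  have cvx i j : (psi (Z ut vt Ct i j) <=
      (t * f (Z u' v' C' i j) + (1 - t) * f (Z u v C i j))%:E)%E.
    rewrite Zt.
    have -> : Z u v C i j + t * (Z u' v' C' i j - Z u v C i j) =
      t * Z u' v' C' i j + (1 - t) * Z u v C i j by ring.
    by apply: psi_convex => //; [exact: fin_lty | exact: fin_lty | rewrite t0 t1].
  have finZt i j : psi (Z ut vt Ct i j) \is a fin_num.
    by rewrite fin_numElt psi_gtNy // (le_lt_trans (cvx i j)) // ltry.
  have e3 := minC ut vt Ct ShCt.
  rewrite EE (E_EFin finZt) lee_fin in e3.
  pose d i j := t * f (Z u' v' C' i j) + (1 - t) * f (Z u v C i j) - f (Z ut vt Ct i j).
  have d0 i j : 0 <= d i j.
    by have := cvx i j; rewrite -(fineK (finZt i j)) lee_fin subr_ge0.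
  have dsum : \sum_(i < n) \sum_(j < n) d i j =
    t * S0' + (1 - t) * S0 - \sum_(i < n) \sum_(j < n)
      (fine (psi (Z ut vt Ct i j)) - Z ut vt Ct i j * Xh i j).
    rewrite /S0 /S0' -sum_lin3; apply: eq_bigr => i _; rewrite -sum_lin3.
    by apply: eq_bigr => j _; rewrite /d /f Zt; ring.
  have dz : \sum_(i < n) \sum_(j < n) d i j = 0.
    apply/le_anti/andP; split; last by apply: sumr_ge0 => i _; apply: sumr_ge0.
    by rewrite dsum S0eq; lra.
  move=> i j.
  have := psumr_eq0P (fun i _ => sumr_ge0 _ (fun j _ => d0 i j)) dz (i := i) isT.
  move=> /(psumr_eq0P (fun j _ => d0 i j)) /(_ j isT).
  by rewrite /d -Zt; lra.
apply: (@Zeq_C u v u' v' C C' ShC ShC') => i j.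
apply/eqP; rewrite -subr_eq0; apply/negP => /negP hne.
case: (tw i j) => nb d2 pos.
apply: (@affine_contra R f (Z u v C i j) (Z u' v' C' i j - Z u v C i j) (f (Z u' v' C' i j) - f (Z u v C i j)) hne (fun t ht => aff t ht i j)).
- by apply: filterS nb => x [].
- exact: d2.
- exact: pos.
Qed.

Lemma E_shift (u v : 'I_n -> R) (C : 'M[R]_n) (c : R) :
  E (fun i => u i - c) (fun j => v j + c) C = E u v C.
Proof.
rewrite /Eobj; apply: eq_bigr => i _; apply: eq_bigr => j _.
have -> : Z (fun i => u i - c) (fun j => v j + c) C i j = Z u v C i j.
  by rewrite /Zmat; congr (_ / _); ring.
by [].
Qed.

Lemma single_le {I : finType} {F : I -> R} : (forall k, 0 <= F k) ->
  forall i, F i <= \sum_k F k.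
Proof. by move=> h i; rewrite (bigD1 i) //= lerDl sumr_ge0. Qed.

Lemma single_le2 {F : 'I_n -> 'I_n -> R} : (forall k l, 0 <= F k l) ->
  forall i j, F i j <= \sum_k \sum_l F k l.
Proof.
move=> h i j; apply: le_trans (single_le (h i) j) _.
by apply: (single_le (F := fun k => \sum_l F k l)) => k; apply: sumr_ge0.
Qed.

Lemma bound_part {d c : 'I_n -> 'I_n -> R} {r0 : R} :
  (forall i j, 0 < d i j) ->
  (forall i j y, ((d i j * `|y| - c i j)%:E <= psi y - (y * Xh i j)%:E)%E) ->
  forall u v C, (E u v C <= r0%:E)%E -> forall i j,
  `|Z u v C i j| <= \sum_k \sum_l `|(r0 + \sum_k \sum_l `|c k l|) / d k l|.
Proof.
move=> d0 hc u v C hE.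
have finZ := E_fin (le_lt_trans hE (ltry _)).
rewrite (E_EFin finZ) lee_fin in hE.
pose t i j := fine (psi (Z u v C i j)) - Z u v C i j * Xh i j.
have ht i j : d i j * `|Z u v C i j| - c i j <= t i j.
  by have := hc i j (Z u v C i j); rewrite -(fineK (finZ i j)) -EFinB lee_fin.
have cn i j : - c i j <= `|c i j| by rewrite -normrN; exact: ler_norm.
have cp i j : c i j <= `|c i j| by exact: ler_norm.
have dz i j : 0 <= d i j * `|Z u v C i j| by rewrite mulr_ge0 // ltW.
set K := r0 + _.
have hK i j : t i j + `|c i j| <= K.
  apply: le_trans (single_le2 (F := fun k l => t k l + `|c k l|) _ i j) _.
    by move=> k l; have := ht k l; have := cp k l; have := dz k l; lra.
  under eq_bigr => k _ do rewrite big_split /=.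
  rewrite big_split /= /K; move: hE; rewrite -/t; lra.
move=> i j.
have h : `|Z u v C i j| <= K / d i j.
  rewrite ler_pdivlMr // mulrC; have := ht i j; have := hK i j; have := cp i j; lra.
apply: le_trans h _; apply: le_trans (ler_norm _) _.
by apply: (single_le2 (F := fun k l => `|K / d k l|)) => k l; exact: normr_ge0.
Qed.

Lemma gauge_part (u v : 'I_n -> R) (C : 'M[R]_n) (i0 : 'I_n) (b : R) : Sh C ->
  (forall i j, `|Z u v C i j| <= b) ->
  [/\ (forall i, `|u i - u i0| <= 4 * gamma * b),
      (forall j, `|v j + u i0| <= 4 * gamma * b) &
      (forall i j, `|C i j| <= 4 * gamma * b)].
Proof.
move=> [C0 Cs Cd] hb.
have hW i j : - (gamma * b) <= u i + v j - C i j /\ u i + v j - C i j <= gamma * b.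
  have := hb i j; rewrite /Zmat normrM normfV (gtr0_norm g0) ler_pdivrMr //.
  by rewrite mulrC ler_norml => /andP[].
have gb : 0 <= gamma * b.
  have := hb i0 i0; move/(le_trans (normr_ge0 _)) => b0; exact: mulr_ge0 (ltW g0) b0.
split => [i|j|i j]; rewrite ler_norml; apply/andP.
- have := hW i i0; have := hW i0 i0; have := hW i i; have := hW i0 i.
  have := Cs i i0; have := Cd i; have := Cd i0; lra.
- have := hW i0 j; have := hW j i0; have := hW i0 i0; have := hW j j.
  have := Cs i0 j; have := Cd i0; have := Cd j; lra.
- have := hW i j; have := hW j i; have := hW i i; have := hW j j.
  have := Cs i j; have := Cd i; have := Cd j; lra.
Qed.

Lemma exist_part : (0 < n)%N -> (forall i j, interior (edom phi) (Xh i j)) ->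
  exists u v C, is_minimizer psi gamma Xh u v C.
Proof.
move=> n0 hint.
have [[u0 [v0 [C0 [Sh0 lt0]]]]|none] :=
  pselect (exists u v C, Sh C /\ (E u v C < +oo)%E); last first.
  exists (fun=> 0), (fun=> 0), 0; split.
    by split => *; rewrite !mxE.
  move=> u' v' C' Sh'.
  have : ~~ (E u' v' C' < +oo)%E by apply/negP => h; apply: none; exists u', v', C'.
  by rewrite -leNgt leye_eq => /eqP ->; exact: leey.
pose r0 := fine (E u0 v0 C0).
have hE0 : E u0 v0 C0 = r0%:E by rewrite fineK // fin_numElt E_gtNy lt0.
have H : forall ij : 'I_n * 'I_n, exists p : R * R, 0 < p.1 /\
    forall y, (((p.1 * `|y| - p.2)%:E <= psi y - (y * Xh ij.1 ij.2)%:E)%E).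
  move=> [i j]; have [d d0 [c hc]] := @psi_coercive R phi hphi (Xh i j) (hint i j).
  by exists (d, c).
have [dc hdc] := choice H.
pose d i j := (dc (i, j)).1; pose c i j := (dc (i, j)).2.
have d0 i j : 0 < d i j := (hdc (i, j)).1.
have hc i j y : ((d i j * `|y| - c i j)%:E <= psi y - (y * Xh i j)%:E)%E := (hdc (i, j)).2 y.
have hB := bound_part d0 hc (r0 := r0).
set B := \sum_k _ in hB.
pose i0 := Ordinal n0.
pose M := 4 * gamma * B.
pose A := [set f : Sp R n | (forall k, `[- M, M]%classic (f k)) /\ Sh (Cf f)].
have inA u v C : Sh C -> (E u v C <= r0%:E)%E ->
    A (enc (fun i => u i - u i0) (fun j => v j + u i0) C).
  move=> ShC hE; have [hu hv hC] := @gauge_part u v C i0 B ShC (hB _ _ _ hE).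
  split; last by rewrite encC.
  by case => [[i|i]|[i j]] /=; rewrite in_itv /= -ler_norml.
have cA : compact A.
  apply: compact_closedI; [exact: box_compact | exact: closed_Sh].
pose F (f : Sp R n) := E (Uf f) (Vf f) (Cf f).
pose L i j (f : Sp R n) := (f (inl (inl i)) + f (inl (inr j)) - f (inr (i, j))) / gamma.
pose G i j f := (psi (L i j f) + (- (L i j f * Xh i j))%:E)%E.
have lG i j : lscf (G i j) /\ forall f, (-oo < G i j f)%E.
  split; last by move=> f; apply: gtNy_add; [exact: psi_gtNy | exact: ltNyr].
  apply: lsc_add.
  - apply: lsc_comp; first exact: cont_L.
    exact: psi_lsc.
  - apply: lsc_real; exact: cont_L2.
  - by move=> f; exact: psi_gtNy.
  - by move=> f; exact: ltNyr.
have lF : lscf F.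
  have -> : F = fun f => \sum_(i <- index_enum 'I_n) \sum_(j <- index_enum 'I_n) G i j f.
    apply/funext => f; rewrite /F /Eobj; apply: eq_bigr => i _; apply: eq_bigr => j _.
    by rewrite /Zmat /Cf mxE.
  have inner i := lsc_sum (index_enum 'I_n) (fun j => G i j) (fun j => (lG i j).1) (fun j => (lG i j).2).
  exact: (lsc_sum (index_enum 'I_n) (fun i f => \sum_(j <- index_enum 'I_n) G i j f)
    (fun i => (inner i).1) (fun i => (inner i).2)).1.
have A0 : A !=set0 by eexists; apply: (inA u0 v0 C0 Sh0); rewrite hE0.
have [fs Afs minF] := lsc_compact_min cA A0 lF.
exists (Uf fs), (Vf fs), (Cf fs); split; first by case: Afs.
move=> u' v' C' Sh'.
have [le|gt] := leP (E u' v' C') r0%:E.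
  by have := minF _ (inA u' v' C' Sh' le); rewrite /F encU encV encC E_shift.
have := minF _ (inA u0 v0 C0 Sh0 (ltac:(by rewrite hE0))).
rewrite /F encU encV encC E_shift hE0 => h.
exact: le_trans h (ltW gt).
Qed.

End Main.


Theorem proposition7 (R : realType) (n : nat) (gamma : R) (phi : R -> \bar R)
    (mu nu : 'I_n -> R) (Xh : 'M[R]_n) :
  (0 < n)%N -> 0 < gamma -> proper_closed_convex phi ->
  prob_vec mu -> prob_vec nu -> transport_plan mu nu Xh ->
  (forall i j, interior (edom phi) (Xh i j)) ->
  (exists (u v : 'I_n -> R) (C : 'M[R]_n), is_minimizer (fconj phi) gamma Xh u v C) /\
  (forall (u v : 'I_n -> R) (C : 'M[R]_n),
     is_minimizer (fconj phi) gamma Xh u v C ->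
     (forall i j, twice_diff_pos (fconj phi) (Zmat gamma u v C i j)) ->
     forall (u' v' : 'I_n -> R) (C' : 'M[R]_n),
       is_minimizer (fconj phi) gamma Xh u' v' C' -> C' = C).
Proof.
move=> n0 g0 hphi _ _ _ hint; split.
  exact: (@exist_part R n gamma phi Xh g0 hphi n0 hint).
move=> u v C hm tw u' v' C' hm'.
exact: (@uniq_part R n gamma phi Xh g0 hphi u v u' v' C C' hm tw hm').
Qed.
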